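(* Let $H$ be a hyperring, $i:A\to B$ a strict injective morphism of $H$-modules (identify $A$ with $i(A)$, a submodule of $B$), and $C$ a submodule of $A$. Let $j:A\to A/C$ and $j':B\to B/C$ be the quotient maps. Then the induced map $i':A/C\to B/C$, $[x]\mapsto[i(x)]$, is a well-defined strict injective morphism, and the square with top $i$, left $j$, right $j'$, bottom $i'$ is both a pullback and a pushout in $\mathrm{Mod}_H$.
   Context: A hyperaddition on a set $M$ is a commutative map $M\times M\to\{$nonempty subsets of $M\}$; for subsets $X+Y=\bigcup_{x\in X,y\in Y}(x+y)$, and elements are identified with singletons. A hypergroup: $(a+b)+c=a+(b+c)$; unique $0$ with $a+0=\{a\}$; unique $-a$ with $0\in a+(-a)$; $a\in b+c\Rightarrow c\in a+(-b)$. A hyperring is a hypergroup with commutative monoid multiplication distributing over hyperaddition. An $H$-module is a hypergroup $M$ with $H\times M\to M$ such that $1m=m$, $0m=0$, $(xy)m=x(ym)$, $x(m_1+m_2)=xm_1+xm_2$, $(x+y)m=xm+ym$. A morphism satisfies $f(0)=0$, $f(rm)=rf(m)$, $f(a+b)\subseteq f(a)+f(b)$; it is strict if equality holds. A submodule of $M$ is a subset $N$ containing $0$, closed under negatives and scalar multiplication, with $a+b\subseteq N$ for all $a,b\in N$. For a submodule $C$ of $B$, $B/C$ is the set of classes of $b_1\equiv b_2\iff b_1+C=b_2+C$, with hyperaddition $[x]+[y]=\{[z]: z\in x'+y', x'\equiv x, y'\equiv y\}$ and action $r[x]=[rx]$. *)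

(* Defs.v *)
From Stdlib Require Import ClassicalEpsilon.

Set Implicit Arguments.
Unset Strict Implicit.

(* A hyperaddition on T is encoded as a ternary relation: [add a b c] means
   c \in a + b.  Sums of subsets X + Y = \bigcup_{x in X, y in Y} (x + y). *)

Definition is_hypergroup (T : Type) (add : T -> T -> T -> Prop) (zero : T) : Prop :=
  (forall a b, exists c, add a b c) /\
  (forall a b c, add a b c -> add b a c) /\
  (* associativity: (a+b)+c = a+(b+c) as sets *)
  (forall a b c d, (exists x, add a b x /\ add x c d) <-> (exists y, add b c y /\ add a y d)) /\
  (forall a c, add a zero c <-> c = a) /\
  (forall z, (forall a c, add a z c <-> c = a) -> z = zero) /\
  (forall a, exists! b, add a b zero) /\
  (forall a b c nb, add b c a -> add b nb zero -> add a nb c).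

Record hyperring := HyperRing {
  hr_car :> Type;
  hr_add : hr_car -> hr_car -> hr_car -> Prop;
  hr_zero : hr_car;
  hr_mul : hr_car -> hr_car -> hr_car;
  hr_one : hr_car;
  hr_hgroup : is_hypergroup hr_add hr_zero;
  hr_mulA : forall x y z, hr_mul x (hr_mul y z) = hr_mul (hr_mul x y) z;
  hr_mulC : forall x y, hr_mul x y = hr_mul y x;
  hr_mul1 : forall x, hr_mul hr_one x = x;
  hr_distr : forall x y z w,
      hr_add (hr_mul x y) (hr_mul x z) w <-> exists t, hr_add y z t /\ w = hr_mul x t
}.

Record hmod_ops (H : hyperring) (M : Type) := HModOps {
  m_add : M -> M -> M -> Prop;
  m_zero : M;
  m_act : H -> M -> M
}.

Definition is_hmodule (H : hyperring) (M : Type) (o : hmod_ops H M) : Prop :=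
  is_hypergroup (m_add o) (m_zero o) /\
  (forall m, m_act o (hr_one H) m = m) /\
  (forall m, m_act o (hr_zero H) m = m_zero o) /\
  (forall x y m, m_act o (hr_mul x y) m = m_act o x (m_act o y m)) /\
  (forall x m1 m2 w, m_add o (m_act o x m1) (m_act o x m2) w <->
                     exists t, m_add o m1 m2 t /\ w = m_act o x t) /\
  (forall x y m w, m_add o (m_act o x m) (m_act o y m) w <->
                   exists t, hr_add x y t /\ w = m_act o t m).

Definition is_morph (H : hyperring) (M N : Type) (oM : hmod_ops H M) (oN : hmod_ops H N)
  (f : M -> N) : Prop :=
  f (m_zero oM) = m_zero oN /\
  (forall r m, f (m_act oM r m) = m_act oN r (f m)) /\
  (forall a b c, m_add oM a b c -> m_add oN (f a) (f b) (f c)).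

Definition is_strict_morph (H : hyperring) (M N : Type) (oM : hmod_ops H M) (oN : hmod_ops H N)
  (f : M -> N) : Prop :=
  is_morph oM oN f /\
  (forall a b d, m_add oN (f a) (f b) d <-> exists c, m_add oM a b c /\ d = f c).

Definition injective (X Y : Type) (f : X -> Y) : Prop := forall x y, f x = f y -> x = y.

Definition is_submodule (H : hyperring) (M : Type) (o : hmod_ops H M) (N : M -> Prop) : Prop :=
  N (m_zero o) /\
  (forall a b, N a -> m_add o a b (m_zero o) -> N b) /\
  (forall r a, N a -> N (m_act o r a)) /\
  (forall a b c, N a -> N b -> m_add o a b c -> N c).

Section Quotient.
Variables (H : hyperring) (M : Type) (o : hmod_ops H M) (C : M -> Prop).

Definition coset (b : M) : M -> Prop := fun z => exists c, C c /\ m_add o b c z.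
Definition qequiv (b1 b2 : M) : Prop := forall z, coset b1 z <-> coset b2 z.
Definition qcls (b : M) : M -> Prop := fun x => qequiv x b.
Definition quot : Type := { P : M -> Prop | exists b, P = qcls b }.
Definition qproj (b : M) : quot := exist _ (qcls b) (ex_intro _ b eq_refl).
Definition qrepr (X : quot) : M :=
  proj1_sig (constructive_indefinite_description _ (proj2_sig X)).

Definition quot_ops : hmod_ops H quot :=
  HModOps
    (fun X Y Z => exists x y z, proj1_sig X x /\ proj1_sig Y y /\ m_add o x y z /\ Z = qproj z)
    (qproj (m_zero o))
    (fun r X => qproj (m_act o r (qrepr X))).
End Quotient.

Definition image_pred (X Y : Type) (f : X -> Y) (P : X -> Prop) : Y -> Prop :=
  fun y => exists x, P x /\ y = f x.

Definition is_pullback (H : hyperring) (A B P Q : Type)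
  (oA : hmod_ops H A) (oB : hmod_ops H B) (oP : hmod_ops H P) (oQ : hmod_ops H Q)
  (i : A -> B) (j : A -> P) (j' : B -> Q) (i' : P -> Q) : Prop :=
  (forall a, j' (i a) = i' (j a)) /\
  forall (D : Type) (oD : hmod_ops H D), is_hmodule oD ->
  forall (g : D -> B) (h : D -> P), is_morph oD oB g -> is_morph oD oP h ->
  (forall d, j' (g d) = i' (h d)) ->
  exists u : D -> A,
    (is_morph oD oA u /\ (forall d, i (u d) = g d) /\ (forall d, j (u d) = h d)) /\
    (forall u' : D -> A,
        is_morph oD oA u' -> (forall d, i (u' d) = g d) -> (forall d, j (u' d) = h d) ->
        forall d, u' d = u d).

Definition is_pushout (H : hyperring) (A B P Q : Type)
  (oA : hmod_ops H A) (oB : hmod_ops H B) (oP : hmod_ops H P) (oQ : hmod_ops H Q)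
  (i : A -> B) (j : A -> P) (j' : B -> Q) (i' : P -> Q) : Prop :=
  (forall a, j' (i a) = i' (j a)) /\
  forall (D : Type) (oD : hmod_ops H D), is_hmodule oD ->
  forall (g : B -> D) (h : P -> D), is_morph oB oD g -> is_morph oP oD h ->
  (forall a, g (i a) = h (j a)) ->
  exists u : Q -> D,
    (is_morph oQ oD u /\ (forall b, u (j' b) = g b) /\ (forall p, u (i' p) = h p)) /\
    (forall u' : Q -> D,
        is_morph oQ oD u' -> (forall b, u' (j' b) = g b) -> (forall p, u' (i' p) = h p) ->
        forall q, u' q = u q).

(* Main.v *)
Require Import Defs.
From Stdlib Require Import ClassicalEpsilon FunctionalExtensionality PropExtensionality ProofIrrelevance.

Set Implicit Arguments.
Unset Strict Implicit.
Section Gen.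
Variables (H : hyperring) (M : Type) (o : hmod_ops H M) (C : M -> Prop).

Lemma quot_ext (X Y : quot o C) : proj1_sig X = proj1_sig Y -> X = Y.
Proof. destruct X as [P p], Y as [Q q]; simpl; intro E; subst; f_equal; apply proof_irrelevance. Qed.

Lemma qe_refl x : qequiv o C x x.
Proof. intro; tauto. Qed.
Lemma qe_sym x y : qequiv o C x y -> qequiv o C y x.
Proof. intros E z; specialize (E z); tauto. Qed.
Lemma qe_trans x y z : qequiv o C x y -> qequiv o C y z -> qequiv o C x z.
Proof. intros E F w; specialize (E w); specialize (F w); tauto. Qed.

Lemma qproj_eq x y : qproj o C x = qproj o C y <-> qequiv o C x y.
Proof.
split.
- intro E. assert (E1 := f_equal (@proj1_sig _ _) E). simpl in E1.
  assert (h : qcls o C x x) by apply qe_refl.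
  rewrite E1 in h. exact h.
- intro E. apply quot_ext; simpl.
  apply functional_extensionality; intro z. apply propositional_extensionality.
  unfold qcls; split; intro h.
  + exact (qe_trans h E).
  + exact (qe_trans h (qe_sym E)).
Qed.

Lemma qrepr_spec X : qproj o C (qrepr X) = X.
Proof.
apply quot_ext. unfold qrepr.
destruct (constructive_indefinite_description _ _) as [b hb]. simpl. symmetry; exact hb.
Qed.

Lemma qrepr_qproj b : qequiv o C (qrepr (qproj o C b)) b.
Proof. apply qproj_eq. apply qrepr_spec. Qed.

Lemma quot_ind (X : quot o C) : exists b, X = qproj o C b.
Proof. exists (qrepr X); symmetry; apply qrepr_spec. Qed.

Lemma qadd x y Z : m_add (quot_ops o C) (qproj o C x) (qproj o C y) Z <->
  exists x' y' z, qequiv o C x' x /\ qequiv o C y' y /\ m_add o x' y' z /\ Z = qproj o C z.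
Proof. simpl. tauto. Qed.

Variables (hM : is_hmodule o) (hC : is_submodule o C).

Lemma cos_sub b b' c0 z : C c0 -> m_add o b' c0 b -> coset o C b z -> coset o C b' z.
Proof.
destruct hM as [[Htot [Hcomm [Hassoc [Hzero [Hzu [Hneg Hrev]]]]]] _].
destruct hC as [C0 [CN [CA CD]]].
intros Cc0 Ha [c [Cc Hz]].
destruct (proj1 (Hassoc b' c0 c z) (ex_intro _ b (conj Ha Hz))) as [y [Hy1 Hy2]].
exists y; split; [exact (CD _ _ _ Cc0 Cc Hy1) | exact Hy2].
Qed.

Lemma qequiv_char b b' : qequiv o C b b' <-> exists c, C c /\ m_add o b' c b.
Proof.
destruct hM as [[Htot [Hcomm [Hassoc [Hzero [Hzu [Hneg Hrev]]]]]] _].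
destruct hC as [C0 [CN [CA CD]]].
split.
- intro E. assert (h : coset o C b b).
  { exists (m_zero o); split; [exact C0|]. apply (proj2 (Hzero b b)); reflexivity. }
  apply E in h. exact h.
- intros [c0 [Cc Ha]] z. split; intro h.
  + exact (cos_sub Cc Ha h).
  + destruct (Hneg c0) as [nc [Hnc _]].
    assert (Cnc : C nc) by exact (CN _ _ Cc Hnc).
    assert (Ha' : m_add o b nc b') by exact (Hrev b c0 b' nc (Hcomm _ _ _ Ha) Hnc).
    exact (cos_sub Cnc Ha' h).
Qed.

Lemma act_compat r b b' : qequiv o C b b' -> qequiv o C (m_act o r b) (m_act o r b').
Proof.
intro E. apply qequiv_char in E. destruct E as [c [Cc Ha]].
apply qequiv_char. exists (m_act o r c). split.
- destruct hC as [C0 [CN [CA CD]]]. auto.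
- destruct hM as [_ [_ [_ [_ [Hdl _]]]]]. apply Hdl. exists b; auto.
Qed.

Lemma qact r b : m_act (quot_ops o C) r (qproj o C b) = qproj o C (m_act o r b).
Proof. simpl. apply qproj_eq. apply act_compat. apply qrepr_qproj. Qed.

End Gen.

Section Main.
Variables (H : hyperring) (A B : Type)
  (oA : hmod_ops H A) (oB : hmod_ops H B)
  (hA : is_hmodule oA) (hB : is_hmodule oB)
  (i : A -> B) (hi : is_strict_morph oA oB i) (hinj : injective i)
  (C : A -> Prop) (hC : is_submodule oA C).

Let CB := image_pred i C.
Let ib := fun X : quot oA C => qproj oB CB (i (qrepr X)).

Lemma i0 : i (m_zero oA) = m_zero oB.
Proof. destruct hi as [[h _] _]; exact h. Qed.
Lemma iact r a : i (m_act oA r a) = m_act oB r (i a).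
Proof. destruct hi as [[_ [h _]] _]; apply h. Qed.
Lemma iadd a b c : m_add oA a b c -> m_add oB (i a) (i b) (i c).
Proof. destruct hi as [[_ [_ h]] _]; apply h. Qed.
Lemma istr a b d : m_add oB (i a) (i b) d -> exists c, m_add oA a b c /\ d = i c.
Proof. destruct hi as [_ h]; apply h. Qed.

Lemma hCB : is_submodule oB CB.
Proof.
destruct hC as [C0 [CN [CA CD]]].
destruct hA as [[_ [_ [_ [_ [_ [HnegA _]]]]]] _].
destruct hB as [[_ [_ [_ [_ [_ [HnegB _]]]]]] _].
split; [|split; [|split]].
- exists (m_zero oA); split; [exact C0| symmetry; apply i0].
- intros a b [c [Cc ->]] Hab.
  destruct (HnegA c) as [nc [Hnc _]].
  destruct (HnegB (i c)) as [nb [_ U]].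
  assert (E1 := U b Hab). assert (E2 := U (i nc)).
  rewrite <- i0 in E2 at 2 || idtac.
  assert (E3 : nb = i nc). { apply E2. rewrite <- i0. apply iadd. exact Hnc. }
  exists nc; split; [exact (CN _ _ Cc Hnc)| congruence].
- intros r a [c [Cc ->]]. exists (m_act oA r c); split; [auto| symmetry; apply iact].
- intros a b d [c1 [C1 ->]] [c2 [C2 ->]] Had.
  destruct (istr Had) as [c3 [H3 ->]]. exists c3; split; eauto.
Qed.

Lemma key x y : qequiv oB CB (i x) (i y) <-> qequiv oA C x y.
Proof.
rewrite (qequiv_char hB hCB), (qequiv_char hA hC). split.
- intros [cb [[c [Cc ->]] Ha]]. destruct (istr Ha) as [a [Ha' E]].
  apply hinj in E. subst. exists c; auto.
- intros [c [Cc Ha]]. exists (i c); split; [exists c; auto| apply iadd; exact Ha].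
Qed.

Lemma img b x : qequiv oB CB b (i x) -> exists a, b = i a.
Proof.
rewrite (qequiv_char hB hCB). intros [cb [[c [Cc ->]] Ha]].
destruct (istr Ha) as [a [_ E]]. eauto.
Qed.

Lemma ibj x : ib (qproj oA C x) = qproj oB CB (i x).
Proof. unfold ib. apply qproj_eq. apply key. apply qrepr_qproj. Qed.

Lemma claim1 x y : qproj oA C x = qproj oA C y -> qproj oB CB (i x) = qproj oB CB (i y).
Proof. rewrite !qproj_eq, key. auto. Qed.

Lemma strict_ib : is_strict_morph (quot_ops oA C) (quot_ops oB CB) ib.
Proof.
assert (madd : forall X Y Z, m_add (quot_ops oA C) X Y Z ->
           m_add (quot_ops oB CB) (ib X) (ib Y) (ib Z)).
{ intros X Y Z. destruct (quot_ind X) as [x ->]. destruct (quot_ind Y) as [y ->].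
  rewrite qadd. intros [x' [y' [z [E1 [E2 [Ha ->]]]]]].
  rewrite !ibj, qadd. exists (i x'), (i y'), (i z).
  rewrite !key. split; [exact E1|split; [exact E2|split; [apply iadd; exact Ha|reflexivity]]]. }
split; [split; [|split]|].
- simpl. rewrite ibj, i0. reflexivity.
- intros r X. destruct (quot_ind X) as [x ->].
  rewrite qact by auto. rewrite !ibj. rewrite (qact hB hCB). rewrite iact. reflexivity.
- exact madd.
- intros X Y D. split.
  + destruct (quot_ind X) as [x ->]. destruct (quot_ind Y) as [y ->].
    rewrite !ibj, qadd. intros [b1 [b2 [w [E1 [E2 [Ha ->]]]]]].
    destruct (img E1) as [a1 ->]. destruct (img E2) as [a2 ->].
    rewrite key in E1, E2.
    destruct (istr Ha) as [a3 [Ha3 ->]].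
    exists (qproj oA C a3). split.
    * rewrite qadd. exists a1, a2, a3. auto.
    * rewrite ibj. reflexivity.
  + intros [Z [HZ ->]]. apply madd; exact HZ.
Qed.

Lemma inj_ib : injective ib.
Proof.
intros X Y. destruct (quot_ind X) as [x ->]. destruct (quot_ind Y) as [y ->].
rewrite !ibj, !qproj_eq, key. auto.
Qed.

Lemma pullback : is_pullback oA oB (quot_ops oA C) (quot_ops oB CB) i (qproj oA C) (qproj oB CB) ib.
Proof.
split.
- intro a. symmetry. apply ibj.
- intros D oD _ g h [g0 [gact gadd]] [h0 [hact hadd]] comm.
  assert (ex : forall d, exists a, g d = i a).
  { intro d. assert (E := comm d). rewrite <- (qrepr_spec (h d)) in E.
    rewrite ibj, qproj_eq in E. exact (img E). }
  exists (fun d => proj1_sig (constructive_indefinite_description _ (ex d))).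
  set (u := fun d => proj1_sig (constructive_indefinite_description _ (ex d))).
  assert (hu : forall d, g d = i (u d)).
  { intro d. unfold u. destruct (constructive_indefinite_description _ _) as [a Ha]. exact Ha. }
  split; [split; [|split]|].
  + split; [|split].
    * apply hinj. rewrite <- hu, i0. exact g0.
    * intros r d. apply hinj. rewrite <- hu, iact, <- hu. apply gact.
    * intros a b c Hd. apply gadd in Hd. rewrite !hu in Hd.
      destruct (istr Hd) as [c' [Hc' E]]. apply hinj in E. rewrite E. exact Hc'.
  + intro d. symmetry. apply hu.
  + intro d. assert (E := comm d). rewrite <- (qrepr_spec (h d)) in E.
    rewrite <- (qrepr_spec (h d)). rewrite ibj, qproj_eq, hu, key in E.
    apply qproj_eq. exact E.
  + intros u' _ Hu' _ d. apply hinj. rewrite Hu'. apply hu.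
Qed.

Lemma pushout : is_pushout oA oB (quot_ops oA C) (quot_ops oB CB) i (qproj oA C) (qproj oB CB) ib.
Proof.
split.
- intro a. symmetry. apply ibj.
- intros D oD hD g h [g0 [gact gadd]] [h0 [hact hadd]] comm.
  destruct hD as [[_ [HcommD [_ [HzeroD _]]]] _].
  assert (wd : forall b b', qequiv oB CB b b' -> g b = g b').
  { intros b b' E. rewrite (qequiv_char hB hCB) in E.
    destruct E as [cb [[c [Cc ->]] Ha]]. apply gadd in Ha.
    rewrite comm in Ha.
    assert (Ej : qproj oA C c = m_zero (quot_ops oA C)).
    { simpl. apply qproj_eq. apply (qequiv_char hA hC). exists c; split; auto.
      destruct hA as [[_ [HcA [_ [HzA _]]]] _]. apply HcA. apply HzA. reflexivity. }
    rewrite Ej, h0 in Ha. apply HzeroD in Ha. exact Ha. }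
  exists (fun Q => g (qrepr Q)).
  assert (uj : forall b, g (qrepr (qproj oB CB b)) = g b).
  { intro b. apply wd. apply qrepr_qproj. }
  split; [split; [|split]|].
  + split; [|split].
    * simpl. rewrite uj. exact g0.
    * intros r Q. destruct (quot_ind Q) as [b ->]. rewrite (qact hB hCB), !uj. apply gact.
    * intros Q1 Q2 Q3. destruct (quot_ind Q1) as [b1 ->]. destruct (quot_ind Q2) as [b2 ->].
      rewrite qadd. intros [x [y [z [E1 [E2 [Ha ->]]]]]].
      rewrite !uj. rewrite <- (wd _ _ E1), <- (wd _ _ E2). apply gadd; exact Ha.
  + intro b. apply uj.
  + intro p. unfold ib. rewrite uj, comm, qrepr_spec. reflexivity.
  + intros u' _ Hu' _ Q. destruct (quot_ind Q) as [b ->]. rewrite Hu', uj. reflexivity.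
Qed.

End Main.

Theorem mainTheorem20 (H : hyperring) (A B : Type)
  (oA : hmod_ops H A) (oB : hmod_ops H B)
  (hA : is_hmodule oA) (hB : is_hmodule oB)
  (i : A -> B) (hi : is_strict_morph oA oB i) (hinj : injective i)
  (C : A -> Prop) (hC : is_submodule oA C) :
  let CB := image_pred i C in
  let j := qproj oA C in
  let j' := qproj oB CB in
  let i' := fun X : quot oA C => qproj oB CB (i (qrepr X)) in
  (* well-definedness of [x] |-> [i x] *)
  (forall x y : A, j x = j y -> j' (i x) = j' (i y)) /\
  (forall x : A, i' (j x) = j' (i x)) /\
  is_strict_morph (quot_ops oA C) (quot_ops oB CB) i' /\
  injective i' /\
  is_pullback oA oB (quot_ops oA C) (quot_ops oB CB) i j j' i' /\
  is_pushout oA oB (quot_ops oA C) (quot_ops oB CB) i j j' i'.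
Proof.
intros CB j j' i'.
split; [exact (claim1 hA hB hi hinj hC)|].
split; [exact (ibj hA hB hi hinj hC)|].
split; [exact (strict_ib hA hB hi hinj hC)|].
split; [exact (inj_ib hA hB hi hinj hC)|].
split; [exact (pullback hA hB hi hinj hC)| exact (pushout hA hB hi hinj hC)].
Qed.
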